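(* Let $X$ be an arbitrary set and $P\subseteq X\times X$ a binary relation, and let $Q=\{(x,y)\in X\times X:(y,x)\notin P\}$. Then $P$ is complete and negatively transitive if and only if there is a family $\mathcal V$ of functions $v:X\to\mathbb R$ such that for all $x,y\in X$: $(x,y)\in Q$ if and only if $v(x)\geq v(y)$ for all $v\in\mathcal V$ and $v(x)>v(y)$ for some $v\in\mathcal V$ (i.e. $P$ is embeddable in $\mathbb R^{\mathcal V}$ with the Pareto order).
   Context: $P$ is complete if for all $x,y$, $(x,y)\in P$ or $(y,x)\in P$; negatively transitive if $(x,y)\notin P$ and $(y,z)\notin P$ imply $(x,z)\notin P$. The Pareto order on $\mathbb R^I$: $(x_\alpha)\succ(y_\alpha)$ iff $x_\alpha\geq y_\alpha$ for all $\alpha\in I$ and $x_\alpha>y_\alpha$ for some $\alpha\in I$; $x\succeq y$ means not $y\succ x$. *)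

(* Defs.v *)
From Stdlib Require Import Reals.
Open Scope R_scope.

Definition complete {X : Type} (P : X -> X -> Prop) : Prop :=
  forall x y : X, P x y \/ P y x.

Definition negatively_transitive {X : Type} (P : X -> X -> Prop) : Prop :=
  forall x y z : X, ~ P x y -> ~ P y z -> ~ P x z.

Definition asym_part {X : Type} (P : X -> X -> Prop) : X -> X -> Prop :=
  fun x y => ~ P y x.

Definition pareto_gt {X : Type} (V : (X -> R) -> Prop) (x y : X) : Prop :=
  (forall v, V v -> v x >= v y) /\ (exists v, V v /\ v x > v y).

(* Main.v *)
Require Import Defs.
From Stdlib Require Import Reals Lra Classical ClassicalEpsilon.
Open Scope R_scope.

Definition vz {X : Type} (P : X -> X -> Prop) (z : X) : X -> R :=
  fun x => if excluded_middle_informative (x = z \/ ~ P x z) then 0 else 1.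

Theorem theorem10 (X : Type) (P : X -> X -> Prop) :
  (complete P /\ negatively_transitive P) <->
  exists V : (X -> R) -> Prop,
    forall x y : X, asym_part P x y <-> pareto_gt V x y.
Proof.
  split.
  - intros [Hc Hn].
    exists (fun v => exists z, v = vz P z).
    intros x y; unfold asym_part, pareto_gt; split.
    + intros Hq. split.
      * intros v [z ->]. unfold vz.
        destruct (excluded_middle_informative (x = z \/ ~ P x z)) as [Hx|Hx];
        destruct (excluded_middle_informative (y = z \/ ~ P y z)) as [Hy|Hy]; try lra.
        exfalso; apply Hy. right. destruct Hx as [->| Hx].
        -- exact Hq.
        -- exact (Hn y x z Hq Hx).
      * exists (vz P y). split; [now exists y|]. unfold vz.
        destruct (excluded_middle_informative (x = y \/ ~ P x y)) as [Hx|Hx];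
        destruct (excluded_middle_informative (y = y \/ ~ P y y)) as [Hy|Hy]; try lra.
        -- exfalso. destruct Hx as [->|Hx].
           ++ destruct (Hc y y); auto.
           ++ destruct (Hc x y); auto.
        -- exfalso; apply Hy; now left.
        -- exfalso; apply Hy; now left.
    + intros [Hge [v [[z ->] Hgt]]].
      specialize (Hge (vz P x) (ex_intro _ x eq_refl)).
      unfold vz in Hge, Hgt.
      destruct (excluded_middle_informative (x = x \/ ~ P x x)) as [Hx|Hx].
      2: exfalso; apply Hx; now left.
      destruct (excluded_middle_informative (y = x \/ ~ P y x)) as [Hy|Hy]; try lra.
      destruct Hy as [->|Hy]; [|exact Hy].
      exfalso. destruct (excluded_middle_informative (x = z \/ ~ P x z)); lra.
  - intros [V HV]. split.
    + intros x y. apply NNPP. intros H.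
      apply not_or_and in H. destruct H as [H1 H2].
      destruct (proj1 (HV y x) H1) as [Ha _].
      destruct (proj1 (HV x y) H2) as [_ [v [Hv Hg]]].
      specialize (Ha v Hv). lra.
    + intros x y z H1 H2.
      destruct (proj1 (HV y x) H1) as [Ha [v [Hv Hg]]].
      destruct (proj1 (HV z y) H2) as [Hb _].
      apply (proj2 (HV z x)). split.
      * intros w Hw. specialize (Ha w Hw). specialize (Hb w Hw). lra.
      * exists v. split; auto. specialize (Hb v Hv). lra.
Qed.
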